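(* For all integers $2\le k\le n$, $$2kn+k\le \gamma_t(G_k\Box G_n)\le 2kn+2k.$$
   Context: For $m\ge 1$, $G_m$ is the graph with vertex set $\{a_1,\ldots,a_m\}\cup\{b_1,\ldots,b_m\}\cup\{c_1,\ldots,c_m\}$ in which $\{a_1,\ldots,a_m\}$ forms a clique, each $b_i$ is adjacent to $a_i$ and to $c_i$, and there are no other edges (i.e. $K_m$ with a path $P_3$ attached by an end-vertex at each clique vertex). $\gamma_t$ denotes the total domination number (minimum size of a set $S$ of vertices such that every vertex of the graph has a neighbor in $S$). $G\Box H$ is the Cartesian product: vertex set $V(G)\times V(H)$, with $(u_1,v_1)\sim(u_2,v_2)$ iff either $u_1=u_2$ and $v_1v_2\in E(H)$, or $v_1=v_2$ and $u_1u_2\in E(G)$. *)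

(* Defs.v *)
From mathcomp Require Import all_boot all_order.
Set Implicit Arguments. Unset Strict Implicit. Unset Printing Implicit Defensive.

(* Vertices of G_m: (0,i) = a_i, (1,i) = b_i, (2,i) = c_i, for i : 'I_m. *)
Definition Gm_vertex (m : nat) : finType := ('I_3 * 'I_m)%type.

(* Adjacency of G_m: {a_i} a clique, b_i ~ a_i, b_i ~ c_i, nothing else. *)
Definition Gm_adj (m : nat) : rel (Gm_vertex m) :=
  fun u v =>
    [|| [&& val u.1 == 0, val v.1 == 0 & u.2 != v.2],
        [&& u.2 == v.2, val u.1 == 0 & val v.1 == 1],
        [&& u.2 == v.2, val u.1 == 1 & val v.1 == 0],
        [&& u.2 == v.2, val u.1 == 1 & val v.1 == 2]
      | [&& u.2 == v.2, val u.1 == 2 & val v.1 == 1] ].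

Definition cart_adj (T1 T2 : finType) (e1 : rel T1) (e2 : rel T2) : rel (T1 * T2) :=
  fun x y => ((x.1 == y.1) && e2 x.2 y.2) || ((x.2 == y.2) && e1 x.1 y.1).

Definition total_dominating (T : finType) (e : rel T) (S : {set T}) : bool :=
  [forall v, exists u, (u \in S) && e v u].

(* Total domination number: minimum size of a total dominating set
   (defaults to #|T| if none exists, which never happens for graphs
   without isolated vertices). *)
Definition gamma_t (T : finType) (e : rel T) : nat :=
  \big[minn/#|T|]_(S : {set T} | total_dominating e S) #|S|.

(* Main.v *)
Require Import Defs.
From mathcomp Require Import all_boot all_order.
From mathcomp Require Import zify.
Set Implicit Arguments. Unset Strict Implicit. Unset Printing Implicit Defensive.

Lemma card_decomp k n (S : {set (Gm_vertex k * Gm_vertex n)}) :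
  #|S| = \sum_(i < k) \sum_(j < n) \sum_(x < 3) \sum_(y < 3)
          (((x, i), (y, j)) \in S : nat).
Proof.
rewrite -sum1_card big_mkcond /=.
rewrite (eq_bigr (fun v => (((v.1.1, v.1.2), (v.2.1, v.2.2)) \in S : nat)));
  last by move=> [[x i] [y j]] _; case: (_ \in S).
rewrite -(pair_bigA _ (fun u w => (((u.1, u.2), (w.1, w.2)) \in S : nat))).
rewrite -(pair_bigA _ (fun x i => \sum_w (((x, i), (w.1,w.2)) \in S : nat))).
rewrite exchange_big; apply: eq_bigr => i _.
rewrite (eq_bigr (fun x => \sum_y \sum_j (((x, i), (y, j)) \in S : nat))); last first.
  by move=> x _; rewrite -(pair_bigA _ (fun y j => (((x, i), (y, j)) \in S : nat))).
rewrite (eq_bigr (fun x => \sum_j \sum_y (((x, i), (y, j)) \in S : nat))); last first.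
  by move=> x _; rewrite exchange_big.
by rewrite exchange_big.
Qed.

Definition mk k n (x : nat) (i : 'I_k) (y : nat) (j : 'I_n)
  : Gm_vertex k * Gm_vertex n := ((inord x : 'I_3, i), (inord y : 'I_3, j)).

Definition gad m (x : nat) (i : 'I_m) (x' : nat) (i' : 'I_m) : bool :=
  [|| [&& x == 0, x' == 0 & i != i'],
      [&& i == i', x == 0 & x' == 1],
      [&& i == i', x == 1 & x' == 0],
      [&& i == i', x == 1 & x' == 2]
    | [&& i == i', x == 2 & x' == 1] ].

Lemma adj_mk k n x i y j x' i' y' j' : x < 3 -> y < 3 -> x' < 3 -> y' < 3 ->
  cart_adj (@Gm_adj k) (@Gm_adj n) (mk x i y j) (mk x' i' y' j') =
  ((x == x') && (i == i') && gad y j y' j') || ((y == y') && (j == j') && gad x i x' i').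
Proof.
move=> hx hy hx' hy'.
rewrite /cart_adj /Gm_adj /mk /gad /= !xpair_eqE -!val_eqE /= !inordK //.
Qed.

Lemma sum3 (F : 'I_3 -> nat) : \sum_(x < 3) F x = F (inord 0) + F (inord 1) + F (inord 2).
Proof.
rewrite !big_ord_recr big_ord0 /= add0n.
congr (F _ + F _ + F _); apply: val_inj; rewrite /= inordK //.
Qed.

Definition TD k n (S : {set (Gm_vertex k * Gm_vertex n)}) :=
  total_dominating (cart_adj (@Gm_adj k) (@Gm_adj n)) S.

Lemma dom_ex k n (S : {set (Gm_vertex k * Gm_vertex n)}) x i y j :
  x < 3 -> y < 3 -> TD S ->
  exists x' i' y' j', [/\ x' < 3, y' < 3, mk x' i' y' j' \in S &
     cart_adj (@Gm_adj k) (@Gm_adj n) (mk x i y j) (mk x' i' y' j')].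
Proof.
move=> hx hy /forallP /(_ (mk x i y j)) /existsP [[[x' i'] [y' j']] /andP [hS hA]].
exists x', i', y', j'; split; rewrite ?ltn_ord //.
- by rewrite /mk !inord_val.
- by rewrite /mk !inord_val.
Qed.

Ltac crunch i j hx hy hS hA :=
  let Hi := fresh "Hi" in let Hj := fresh "Hj" in
  match type of hS with is_true (mk ?x' ?i' ?y' ?j' \in _) =>
  rewrite adj_mk // /gad in hA;
  move: hx hy hS hA; case: x' => [|[|[|?]]] //; case: y' => [|[|[|?]]] //;
  case: (eqVneq i i') => [<-|/negbTE Hi]; try rewrite Hi;
  case: (eqVneq j j') => [<-|/negbTE Hj]; try rewrite Hj;
  rewrite ?eqxx /= => hx hy hS hA //
  end.


Ltac fin hS i j := match type of hS with is_true (mk _ ?a _ ?b \in _) =>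
  first [ by rewrite hS ?orbT | by exists a; rewrite hS ?orbT | by exists b; rewrite hS ?orbT
  | by exists j; rewrite hS ?orbT | by exists i; rewrite hS ?orbT ] end.

Lemma N1 k n (S : {set (Gm_vertex k * Gm_vertex n)}) i j : TD S ->
  (mk 1 i 2 j \in S) || (mk 2 i 1 j \in S).
Proof.
move=> hD; have [x' [i' [y' [j' [hx hy hS hA]]]]] := dom_ex i j (isT : 2 < 3) (isT : 2 < 3) hD.
crunch i j hx hy hS hA; fin hS i j.
Qed.

Lemma N2 k n (S : {set (Gm_vertex k * Gm_vertex n)}) i j : TD S ->
  [|| mk 0 i 2 j \in S, mk 2 i 2 j \in S | mk 1 i 1 j \in S].
Proof.
move=> hD; have [x' [i' [y' [j' [hx hy hS hA]]]]] := dom_ex i j (isT : 1 < 3) (isT : 2 < 3) hD.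
crunch i j hx hy hS hA; fin hS i j.
Qed.

Lemma N3 k n (S : {set (Gm_vertex k * Gm_vertex n)}) i j : TD S ->
  [|| mk 1 i 1 j \in S, mk 2 i 0 j \in S | mk 2 i 2 j \in S].
Proof.
move=> hD; have [x' [i' [y' [j' [hx hy hS hA]]]]] := dom_ex i j (isT : 2 < 3) (isT : 1 < 3) hD.
crunch i j hx hy hS hA; fin hS i j.
Qed.

Lemma N4 k n (S : {set (Gm_vertex k * Gm_vertex n)}) i j : TD S ->
  exists j', [|| mk 1 i 0 j \in S, mk 2 i 1 j \in S | mk 2 i 0 j' \in S].
Proof.
move=> hD; have [x' [i' [y' [j' [hx hy hS hA]]]]] := dom_ex i j (isT : 2 < 3) (isT : 0 < 3) hD.
crunch i j hx hy hS hA; fin hS i j.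
Qed.

Lemma N5 k n (S : {set (Gm_vertex k * Gm_vertex n)}) i j : TD S ->
  exists i', [|| mk 0 i 1 j \in S, mk 1 i 2 j \in S | mk 0 i' 2 j \in S].
Proof.
move=> hD; have [x' [i' [y' [j' [hx hy hS hA]]]]] := dom_ex i j (isT : 0 < 3) (isT : 2 < 3) hD.
crunch i j hx hy hS hA; fin hS i j.
Qed.

Definition g k n (S : {set (Gm_vertex k * Gm_vertex n)}) i j : nat :=
  \sum_(x < 3) \sum_(y < 3) (((x, i), (y, j)) \in S : nat).

Lemma g_eq k n (S : {set (Gm_vertex k * Gm_vertex n)}) i j : g S i j =
  (mk 0 i 0 j \in S) + (mk 0 i 1 j \in S) + (mk 0 i 2 j \in S) +
  (mk 1 i 0 j \in S) + (mk 1 i 1 j \in S) + (mk 1 i 2 j \in S) +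
  (mk 2 i 0 j \in S) + (mk 2 i 1 j \in S) + (mk 2 i 2 j \in S).
Proof. by rewrite /g sum3 !sum3 /mk !addnA. Qed.

Lemma L1 (b00 b01 b02 b10 b11 b12 b20 b21 b22 : bool) :
  b12 || b21 -> [|| b02, b22 | b11] -> [|| b11, b20 | b22] ->
  2 <= b00 + b01 + b02 + b10 + b11 + b12 + b20 + b21 + b22.
Proof. by case: b00; case: b01; case: b02; case: b10; case: b11; case: b12; case: b20; case: b21; case: b22. Qed.

Lemma L2 (b00 b01 b02 b10 b11 b12 b20 b21 b22 : bool) :
  b12 || b21 -> [|| b02, b22 | b11] -> [|| b11, b20 | b22] -> b02 || b20 ->
  3 <= b00 + b01 + b02 + b10 + b11 + b12 + b20 + b21 + b22.
Proof. by case: b00; case: b01; case: b02; case: b10; case: b11; case: b12; case: b20; case: b21; case: b22. Qed.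

Lemma L4 (b00 b01 b02 b10 b11 b12 b20 b21 b22 e4 e5 : bool) :
  b12 || b21 -> [|| b02, b22 | b11] -> [|| b11, b20 | b22] ->
  [|| b10, b21 | e4] -> [|| b01, b12 | e5] ->
  b00 + b01 + b02 + b10 + b11 + b12 + b20 + b21 + b22 <= 2 -> e4 || e5.
Proof. by case: b00; case: b01; case: b02; case: b10; case: b11; case: b12; case: b20; case: b21; case: b22; case: e4; case: e5. Qed.

Lemma g_ge2 k n (S : {set (Gm_vertex k * Gm_vertex n)}) i j : TD S -> 2 <= g S i j.
Proof. move=> hD; rewrite g_eq; apply: L1; [exact: N1|exact: N2|exact: N3]. Qed.

Lemma g_ge3 k n (S : {set (Gm_vertex k * Gm_vertex n)}) i j : TD S ->
  (mk 0 i 2 j \in S) || (mk 2 i 0 j \in S) -> 2 < g S i j.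
Proof. move=> hD h; rewrite g_eq; apply: L2 => //; [exact: N1|exact: N2|exact: N3]. Qed.

Lemma g_le2 k n (S : {set (Gm_vertex k * Gm_vertex n)}) i j : TD S ->
  g S i j <= 2 -> (exists i', 2 < g S i' j) \/ (exists j', 2 < g S i j').
Proof.
move=> hD; rewrite g_eq => hle.
have [j' h4] := N4 i j hD; have [i' h5] := N5 i j hD.
have := L4 (N1 i j hD) (N2 i j hD) (N3 i j hD) h4 h5 hle.
case/orP=> h.
- by right; exists j'; apply: g_ge3 => //; rewrite h orbT.
- by left; exists i'; apply: g_ge3 => //; rewrite h.
Qed.

Lemma lower k n (S : {set (Gm_vertex k * Gm_vertex n)}) : k <= n -> TD S ->
  2 * k * n + k <= #|S|.
Proof.
move=> hkn hD; rewrite card_decomp.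
rewrite (eq_bigr (fun i => \sum_(j < n) g S i j)) //.
have step : \sum_(i < k) \sum_(j < n) (2 + (2 < g S i j)) <= \sum_(i < k) \sum_(j < n) g S i j.
  apply: leq_sum => i _; apply: leq_sum => j _.
  have := g_ge2 i j hD; case: (ltnP 2 (g S i j)) => //= _ _; by rewrite addn0.
apply: leq_trans step.
have -> : \sum_(i < k) \sum_(j < n) (2 + (2 < g S i j)) =
    2 * k * n + \sum_(i < k) \sum_(j < n) (2 < g S i j : nat).
  rewrite (eq_bigr (fun i => 2 * n + \sum_(j < n) (2 < g S i j : nat))); last first.
    by move=> i _; rewrite big_split /= sum_nat_const card_ord mulnC.
  by rewrite big_split /= sum_nat_const card_ord mulnA (mulnC k).
rewrite leq_add2l.
case: (boolP [forall i : 'I_k, [exists j : 'I_n, 2 < g S i j]]).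
- move/forallP=> H.
  apply: leq_trans (_ : \sum_(i < k) 1 <= _).
    by rewrite sum_nat_const card_ord muln1.
  apply: leq_sum => i _; have /existsP [j hj] := H i.
  by rewrite (bigD1 j) //= hj.
- rewrite negb_forall => /existsP [i0]; rewrite negb_exists => /forallP H0.
  rewrite exchange_big /=.
  apply: leq_trans hkn _.
  apply: leq_trans (_ : \sum_(j < n) 1 <= _).
    by rewrite sum_nat_const card_ord muln1.
  apply: leq_sum => j _.
  have : g S i0 j <= 2 by rewrite leqNgt H0.
  case/(g_le2 hD) => [[i' hi'] | [j' hj']].
  + by rewrite (bigD1 i') //= hi'.
  + by move: (H0 j'); rewrite hj'.
Qed.

Definition inS0 (x y : nat) (b : bool) : bool :=
  if b then (x, y) \in [:: (0,0); (2,0); (2,1); (0,2)] else (x, y) \in [:: (1,2); (1,1)].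

Definition S0 k n : {set (Gm_vertex k * Gm_vertex n)} :=
  [set v | inS0 (val v.1.1) (val v.2.1) (val v.2.2 == 0)].

Lemma mem_S0 k n x (i : 'I_k) y (j : 'I_n) : x < 3 -> y < 3 ->
  (mk x i y j \in S0 k n) = inS0 x y (val j == 0).
Proof. by move=> hx hy; rewrite inE /mk /= !inordK. Qed.

Definition oth k' (i : 'I_k'.+2) : 'I_k'.+2 := if val i == 0 then inord 1 else ord0.

Lemma oth_neq k' (i : 'I_k'.+2) : (i == oth i) = false.
Proof.
rewrite /oth; case: ifP => h; apply/negbTE; rewrite -val_eqE /=.
- by rewrite inordK // (eqP h).
- by rewrite h.
Qed.

Lemma TD_S0 k' n' : TD (S0 k'.+2 n'.+2).
Proof.
apply/forallP => -[[x i] [y j]].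
have -> : ((x, i), (y, j)) = mk x i y j by rewrite /mk !inord_val.
have hx := ltn_ord x; have hy := ltn_ord y.
move: (nat_of_ord x) (nat_of_ord y) hx hy => a b ha hb.
apply/existsP.
have hio := oth_neq i.
case hj: (val j == 0).
- case: a ha => [|[|[|a]]] // ha; case: b hb => [|[|[|b]]] // hb.
  + by exists (mk 0 (oth i) 0 j); rewrite mem_S0 // adj_mk // /gad hj /= ?eqxx ?hio.
  + by exists (mk 0 i 0 j); rewrite mem_S0 // adj_mk // /gad hj /= ?eqxx ?hio.
  + by exists (mk 0 (oth i) 2 j); rewrite mem_S0 // adj_mk // /gad hj /= ?eqxx ?hio.
  + by exists (mk 0 i 0 j); rewrite mem_S0 // adj_mk // /gad hj /= ?eqxx ?hio.
  + by exists (mk 2 i 1 j); rewrite mem_S0 // adj_mk // /gad hj /= ?eqxx ?hio.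
  + by exists (mk 0 i 2 j); rewrite mem_S0 // adj_mk // /gad hj /= ?eqxx ?hio.
  + by exists (mk 2 i 1 j); rewrite mem_S0 // adj_mk // /gad hj /= ?eqxx ?hio.
  + by exists (mk 2 i 0 j); rewrite mem_S0 // adj_mk // /gad hj /= ?eqxx ?hio.
  + by exists (mk 2 i 1 j); rewrite mem_S0 // adj_mk // /gad hj /= ?eqxx ?hio.
- have hj0 : (j == ord0) = false by rewrite -val_eqE /= hj.
  case: a ha => [|[|[|a]]] // ha; case: b hb => [|[|[|b]]] // hb.
  + by exists (mk 0 i 0 ord0); rewrite mem_S0 // adj_mk // /gad /= ?eqxx ?hj0.
  + by exists (mk 1 i 1 j); rewrite mem_S0 // adj_mk // /gad hj /= ?eqxx ?hj0.
  + by exists (mk 1 i 2 j); rewrite mem_S0 // adj_mk // /gad hj /= ?eqxx ?hj0.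
  + by exists (mk 1 i 1 j); rewrite mem_S0 // adj_mk // /gad hj /= ?eqxx ?hj0.
  + by exists (mk 1 i 2 j); rewrite mem_S0 // adj_mk // /gad hj /= ?eqxx ?hj0.
  + by exists (mk 1 i 1 j); rewrite mem_S0 // adj_mk // /gad hj /= ?eqxx ?hj0.
  + by exists (mk 2 i 0 ord0); rewrite mem_S0 // adj_mk // /gad /= ?eqxx ?hj0.
  + by exists (mk 1 i 1 j); rewrite mem_S0 // adj_mk // /gad hj /= ?eqxx ?hj0.
  + by exists (mk 1 i 2 j); rewrite mem_S0 // adj_mk // /gad hj /= ?eqxx ?hj0.
Qed.

Lemma card_S0 k n' : #|S0 k n'.+1| = 2 * k * n'.+1 + 2 * k.
Proof.
rewrite card_decomp.
rewrite (eq_bigr (fun i => \sum_(j < n'.+1) (2 + 2 * (val j == 0)))); last first.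
  move=> i _; apply: eq_bigr => j _.
  by rewrite -/(g _ i j) g_eq !mem_S0 //; case: (val j == 0).
rewrite (eq_bigr (fun i => 2 * n'.+1 + 2)); last first.
  move=> i _; rewrite big_split /= sum_nat_const card_ord mulnC -big_distrr /=.
  rewrite (bigD1 ord0) //= big1 // => j hj.
  by rewrite eqn0Ngt lt0n -[_ != 0]/(j != ord0 :> 'I_n'.+1) ?hj.
rewrite sum_nat_const card_ord; lia.
Qed.

Lemma bigmin_le (T : finType) (P : pred T) (F : T -> nat) x0 s : P s ->
  \big[minn/x0]_(S | P S) F S <= F s.
Proof.
move=> Ps; have := mem_index_enum s.
elim: (index_enum T) => // a r IH; rewrite inE big_cons.
case/orP => [/eqP <- | hr]; first by rewrite Ps geq_minl.
case: (P a); last exact: IH.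
exact: leq_trans (geq_minr _ _) (IH hr).
Qed.

Theorem proposition5 (k n : nat) :
  2 <= k -> k <= n ->
  2 * k * n + k <= gamma_t (cart_adj (@Gm_adj k) (@Gm_adj n)) <= 2 * k * n + 2 * k.
Proof.
case: k => [|[|k']] //; case: n => [|[|n']] // hk hkn.
apply/andP; split.
- rewrite /gamma_t; apply: (big_ind (fun m => 2 * k'.+2 * n'.+2 + k'.+2 <= m)).
  + rewrite !card_prod !card_ord /Gm_vertex; lia.
  + by move=> x y hx hy; rewrite leq_min hx hy.
  + by move=> S hS; apply: lower.
- rewrite /gamma_t; apply: leq_trans (bigmin_le _ _ (TD_S0 k' n')) _.
  by rewrite card_S0.
Qed.
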